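(* Let $g\colon\mathbb X\to\mathbb Y$ be continuous, let $D\subset\mathbb Y$ be nonempty and closed, and let $\Phi\colon\mathbb X\rightrightarrows\mathbb Y$ be given by $\Phi(x):=g(x)-D$ for all $x\in\mathbb X$. Fix $(x,y)\in\operatorname{gph}\Phi$. Then: (i) For each $y^*\in\mathbb Y$, \[\widehat D^*\Phi(x,y)(y^* )\subset\begin{cases}\widehat D^*g(x)(y^* )& \text{if } y^*\in\widehat{\mathcal N}_D(g(x)-y),\\ \varnothing&\text{otherwise},\end{cases}\] and the opposite inclusion holds if $g$ is calm at $x$. (ii) For each $y^*\in\mathbb Y$, \[D^*\Phi(x,y)(y^* )\subset\begin{cases}D^*g(x)(y^* )& \text{if } y^*\in\mathcal N_D(g(x)-y),\\ \varnothing&\text{otherwise}.\end{cases}\] (iii) If $g$ is calm at $x$, then for each pair of directions $(u,v)\in\mathbb X\times\mathbb Y$ and each $y^*\in\mathbb Y$, $D^*\Phi((x,y);(u,v))(y^* )$ is contained in the union, over all $w\in Dg(x)(u)$ with $y^*\in\mathcal N_D(g(x)-y;w-v)$, of the sets $D^*g(x;(u,w))(y^* )$ (and is empty if no such $w$ exists).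
   Context: $\mathbb X,\mathbb Y$ are Euclidean spaces. For a closed set $Q$ and $\bar z\in Q$, $\widehat{\mathcal N}_Q(\bar z)=\{\eta\mid \langle\eta,z-\bar z\rangle\le o(\|z-\bar z\|)\ \forall z\in Q\}$ is the regular normal cone, $\mathcal N_Q(\bar z)$ the limiting normal cone (limits of $\eta_k\in\widehat{\mathcal N}_Q(z_k)$ with $Q\ni z_k\to\bar z$); both are empty for $\bar z\notin Q$. For a direction $w$, the directional limiting normal cone $\mathcal N_Q(\bar z;w)$ is the set of all $\eta$ for which there exist $w_k\to w$, $t_k\searrow0$, $\eta_k\to\eta$ with $\eta_k\in\widehat{\mathcal N}_Q(\bar z+t_kw_k)$ for all $k$. For a set-valued map $\Psi$ with closed graph and $(\bar x,\bar y)\in\operatorname{gph}\Psi$: $\widehat D^*\Psi(\bar x,\bar y)(y^* )=\{x^*\mid(x^*,-y^* )\in\widehat{\mathcal N}_{\operatorname{gph}\Psi}(\bar x,\bar y)\}$ (regular coderivative), $D^*\Psi(\bar x,\bar y)(y^* )=\{x^*\mid(x^*,-y^* )\in\mathcal N_{\operatorname{gph}\Psi}(\bar x,\bar y)\}$ (limiting coderivative), and $D^*\Psi((\bar x,\bar y);(u,v))(y^* )=\{x^*\mid(x^*,-y^* )\in\mathcal N_{\operatorname{gph}\Psi}((\bar x,\bar y);(u,v))\}$ (directional limiting coderivative). For single-valued $g$ one writes $\widehat D^*g(x)$, $D^*g(x)$, $D^*g(x;(u,w))$. The graphical derivative $Dg(x)(u)$ is the set of $w$ with $(u,w)$ in the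 (Bouligand) tangent cone to $\operatorname{gph}g$ at $(x,g(x))$. $g$ is calm at $x$ if there are a neighbourhood $U$ of $x$ and $L>0$ with $\|g(x')-g(x)\|\le L\|x'-x\|$ for all $x'\in U$. *)

(* Defs.v *)
(* X = 'rV[R]_n, Y = 'rV[R]_m with the standard
   Euclidean inner product; X x Y is identified with 'rV[R]_(n + m) via row_mx
   (whose standard inner product is the sum of the two inner products). *)
From HB Require Import structures.
From mathcomp Require Import all_boot all_order all_algebra.
From mathcomp Require Import all_classical all_reals all_analysis.
Set Implicit Arguments. Unset Strict Implicit. Unset Printing Implicit Defensive.
Import Order.TTheory GRing.Theory Num.Theory.
Import numFieldNormedType.Exports.
Local Open Scope classical_set_scope.
Local Open Scope ring_scope.

Definition dotv {R : realType} {n : nat} (u v : 'rV[R]_n) : R :=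
  \sum_(i < n) u ord0 i * v ord0 i.
Definition enorm {R : realType} {n : nat} (u : 'rV[R]_n) : R :=
  Num.sqrt (dotv u u).

Definition rnormal {R : realType} {n : nat} (Q : set 'rV[R]_n) (zb : 'rV[R]_n)
  : set 'rV[R]_n :=
  [set eta | Q zb /\
    forall eps : R, 0 < eps -> exists2 delta : R, 0 < delta &
      forall z, Q z -> enorm (z - zb) < delta ->
        dotv eta (z - zb) <= eps * enorm (z - zb)].

Definition lnormal {R : realType} {n : nat} (Q : set 'rV[R]_n) (zb : 'rV[R]_n)
  : set 'rV[R]_n :=
  [set eta | exists (z_ eta_ : nat -> 'rV[R]_n),
    (forall k, rnormal Q (z_ k) (eta_ k)) /\
    z_ @ \oo --> zb /\ eta_ @ \oo --> eta].

Definition dlnormal {R : realType} {n : nat} (Q : set 'rV[R]_n)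
  (zb w : 'rV[R]_n) : set 'rV[R]_n :=
  [set eta | exists (t_ : nat -> R) (w_ eta_ : nat -> 'rV[R]_n),
    (forall k, 0 < t_ k) /\ t_ @ \oo --> (0 : R) /\
    w_ @ \oo --> w /\ eta_ @ \oo --> eta /\
    (forall k, rnormal Q (zb + t_ k *: w_ k) (eta_ k))].

Definition tangent {R : realType} {n : nat} (Q : set 'rV[R]_n) (zb : 'rV[R]_n)
  : set 'rV[R]_n :=
  [set d | exists (t_ : nat -> R) (d_ : nat -> 'rV[R]_n),
    (forall k, 0 < t_ k) /\ t_ @ \oo --> (0 : R) /\
    d_ @ \oo --> d /\ (forall k, Q (zb + t_ k *: d_ k))].

Definition gph {R : realType} {n m : nat} (Psi : 'rV[R]_n -> set 'rV[R]_m)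
  : set 'rV[R]_(n + m) :=
  [set z | exists x y, Psi x y /\ z = row_mx x y].

Definition sv {R : realType} {n m : nat} (g : 'rV[R]_n -> 'rV[R]_m)
  : 'rV[R]_n -> set 'rV[R]_m := fun x => [set g x].

Definition rcoder {R : realType} {n m : nat} (Psi : 'rV[R]_n -> set 'rV[R]_m)
  (x : 'rV[R]_n) (y ys : 'rV[R]_m) : set 'rV[R]_n :=
  [set xs | rnormal (gph Psi) (row_mx x y) (row_mx xs (- ys))].
Definition lcoder {R : realType} {n m : nat} (Psi : 'rV[R]_n -> set 'rV[R]_m)
  (x : 'rV[R]_n) (y ys : 'rV[R]_m) : set 'rV[R]_n :=
  [set xs | lnormal (gph Psi) (row_mx x y) (row_mx xs (- ys))].
Definition dcoder {R : realType} {n m : nat} (Psi : 'rV[R]_n -> set 'rV[R]_m)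
  (x : 'rV[R]_n) (y : 'rV[R]_m) (u : 'rV[R]_n) (v ys : 'rV[R]_m)
  : set 'rV[R]_n :=
  [set xs | dlnormal (gph Psi) (row_mx x y) (row_mx u v) (row_mx xs (- ys))].

Definition gderiv {R : realType} {n m : nat} (g : 'rV[R]_n -> 'rV[R]_m)
  (x u : 'rV[R]_n) : set 'rV[R]_m :=
  [set w | tangent (gph (sv g)) (row_mx x (g x)) (row_mx u w)].

Definition calm {R : realType} {n m : nat} (g : 'rV[R]_n -> 'rV[R]_m)
  (x : 'rV[R]_n) : Prop :=
  exists2 delta : R, 0 < delta & exists2 L : R, 0 < L &
    forall x', enorm (x' - x) < delta -> enorm (g x' - g x) <= L * enorm (x' - x).

(* Main.v *)
Require Import Defs.
From HB Require Import structures.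
From mathcomp Require Import all_boot all_order all_algebra.
From mathcomp Require Import all_classical all_reals all_analysis.
From mathcomp Require Import ring lra.
Import Order.TTheory GRing.Theory Num.Theory.
Import numFieldNormedType.Exports.
Local Open Scope classical_set_scope.
Local Open Scope ring_scope.

Lemma dotv_row_mx {R : realType} {n1 n2 : nat} (a c : 'rV[R]_n1) (b d : 'rV[R]_n2) :
  dotv (row_mx a b) (row_mx c d) = dotv a c + dotv b d.
Proof.
rewrite /dotv big_split_ord /=; congr (_ + _); apply: eq_bigr => i _;
  by rewrite ?row_mxEl ?row_mxEr.
Qed.

Lemma dotv_rowr {R : realType} {n1 n2 : nat} (e : 'rV[R]_(n1 + n2)) a b :
  dotv e (row_mx a b) = dotv (lsubmx e) a + dotv (rsubmx e) b.
Proof. by rewrite -{1}[e]hsubmxK dotv_row_mx. Qed.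

Lemma dotvDr {R : realType} {n : nat} (u v w : 'rV[R]_n) :
  dotv u (v + w) = dotv u v + dotv u w.
Proof. by rewrite /dotv -big_split; apply: eq_bigr => i _; rewrite mxE mulrDr. Qed.

Lemma dotvNr {R : realType} {n : nat} (u v : 'rV[R]_n) :
  dotv u (- v) = - dotv u v.
Proof. by rewrite /dotv -sumrN; apply: eq_bigr => i _; rewrite mxE mulrN. Qed.

Lemma dotvNl {R : realType} {n : nat} (u v : 'rV[R]_n) :
  dotv (- u) v = - dotv u v.
Proof. by rewrite /dotv -sumrN; apply: eq_bigr => i _; rewrite mxE mulNr. Qed.

Lemma dotv0r {R : realType} {n : nat} (u : 'rV[R]_n) : dotv u 0 = 0.
Proof. by rewrite /dotv big1 // => i _; rewrite mxE mulr0. Qed.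

Lemma dotvZ {R : realType} {n : nat} (c : R) (u v : 'rV[R]_n) :
  dotv (c *: u) (c *: v) = c ^+ 2 * dotv u v.
Proof.
rewrite /dotv mulr_sumr; apply: eq_bigr => i _; rewrite !mxE; ring.
Qed.

Lemma dotvv_ge0 {R : realType} {n : nat} (u : 'rV[R]_n) : 0 <= dotv u u.
Proof. by rewrite /dotv sumr_ge0 // => i _; rewrite -expr2 sqr_ge0. Qed.

Lemma enorm_ge0 {R : realType} {n : nat} (u : 'rV[R]_n) : 0 <= enorm u.
Proof. exact: sqrtr_ge0. Qed.

Lemma enorm_row_mx_l {R : realType} {n1 n2 : nat} (a : 'rV[R]_n1) (b : 'rV[R]_n2) :
  enorm a <= enorm (row_mx a b).
Proof.
rewrite /enorm dotv_row_mx ler_sqrt; last by rewrite addr_ge0 ?dotvv_ge0.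
by rewrite lerDl dotvv_ge0.
Qed.

Lemma enorm_row_mx_r {R : realType} {n1 n2 : nat} (a : 'rV[R]_n1) (b : 'rV[R]_n2) :
  enorm b <= enorm (row_mx a b).
Proof.
rewrite /enorm dotv_row_mx ler_sqrt; last by rewrite addr_ge0 ?dotvv_ge0.
by rewrite lerDr dotvv_ge0.
Qed.

Lemma enorm_row_mx_le {R : realType} {n1 n2 : nat} (a : 'rV[R]_n1) (b : 'rV[R]_n2) :
  enorm (row_mx a b) <= enorm a + enorm b.
Proof.
have h0 : 0 <= enorm a + enorm b by rewrite addr_ge0 ?enorm_ge0.
rewrite -(ger0_norm h0) -sqrtr_sqr /enorm dotv_row_mx ler_sqrt; last first.
  exact: sqr_ge0.
rewrite sqrrD !sqr_sqrtr ?dotvv_ge0 // -addrA lerD2l lerDr.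
by rewrite mulrn_wge0 // mulr_ge0 // sqrtr_ge0.
Qed.

Lemma enorm_row0 {R : realType} {n1 n2 : nat} (b : 'rV[R]_n2) :
  enorm (row_mx (0 : 'rV[R]_n1) b) = enorm b.
Proof. by rewrite /enorm dotv_row_mx dotv0r add0r. Qed.

Lemma enormZ {R : realType} {n : nat} (c : R) (u : 'rV[R]_n) :
  enorm (c *: u) = `|c| * enorm u.
Proof. by rewrite /enorm dotvZ sqrtrM ?sqr_ge0 // sqrtr_sqr. Qed.

Lemma enormN {R : realType} {n : nat} (u : 'rV[R]_n) : enorm (- u) = enorm u.
Proof. by rewrite -scaleN1r enormZ normrN normr1 mul1r. Qed.

Lemma enormB {R : realType} {n : nat} (u v : 'rV[R]_n) : enorm (u - v) = enorm (v - u).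
Proof. by rewrite -enormN opprB. Qed.

Lemma entry_le_norm {R : realType} {n : nat} (z : 'rV[R]_n) i : `|z ord0 i| <= `|z|.
Proof.
have -> : `|z| = mx_norm z by [].
rewrite mx_normrE.
exact: (@le_bigmax _ _ _ 0 (fun ij : 'I_1 * 'I_n => `|z ij.1 ij.2|) (ord0, i)).
Qed.

Lemma norm_le_enorm {R : realType} {n : nat} (z : 'rV[R]_n) : `|z| <= enorm z.
Proof.
have -> : `|z| = mx_norm z by [].
rewrite mx_normrE.
apply: bigmax_le => [|[i j] _]; first exact: enorm_ge0.
rewrite /= (ord1 i) -sqrtr_sqr /enorm ler_sqrt; last exact: dotvv_ge0.
rewrite /dotv (bigD1 j) //= -expr2 lerDl.
by rewrite sumr_ge0 // => k _; rewrite -expr2 sqr_ge0.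
Qed.

Lemma enorm_le_norm {R : realType} {n : nat} (z : 'rV[R]_n) : enorm z <= n%:R * `|z|.
Proof.
have h0 : 0 <= n%:R * `|z| by rewrite mulr_ge0.
rewrite -(ger0_norm h0) -sqrtr_sqr /enorm ler_sqrt; last exact: sqr_ge0.
apply: (@le_trans _ _ (\sum_(i < n) `|z|^+2)).
  apply: ler_sum => i _; rewrite -expr2 -real_normK ?num_real //.
  by rewrite lerXn2r ?nnegrE // entry_le_norm.
rewrite sumr_const card_ord -[X in X <= _]mulr_natl exprMn ler_wpM2r ?sqr_ge0 //.
rewrite -natrX ler_nat; case: (n) => // k; by rewrite expnS expn1 leq_pmulr.
Qed.

Ltac rowring := apply/rowP => ?; rewrite !mxE; ring.

Lemma regA {R : realType} {n m : nat} (g : 'rV[R]_n -> 'rV[R]_m) (D : set 'rV[R]_m)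
  (Phi : 'rV[R]_n -> set 'rV[R]_m) (HPhi : forall x', Phi x' = [set g x' - d | d in D])
  (x0 : 'rV[R]_n) (y0 : 'rV[R]_m) (e : 'rV[R]_(n + m)) :
  Phi x0 y0 -> rnormal (gph Phi) (row_mx x0 y0) e ->
  rnormal D (g x0 - y0) (- rsubmx e) /\ rnormal (gph (sv g)) (row_mx x0 (g x0)) e.
Proof.
move=> Hxy [_ He]; rewrite HPhi in Hxy; case: Hxy => d0 Dd0 Ey0; subst y0.
have -> : g x0 - (g x0 - d0) = d0 by rowring.
split.
  split => // eps eps0; have [del del0 H] := He eps eps0.
  exists del => // z Dz Hz.
  have Hd : row_mx x0 (g x0 - z) - row_mx x0 (g x0 - d0) = row_mx 0 (d0 - z).
    by rewrite opp_row_mx add_row_mx; congr row_mx; rowring.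
  have := H (row_mx x0 (g x0 - z)).
  rewrite Hd enorm_row0 dotv_rowr dotv0r add0r enormB => /(_ _ Hz).
  have -> : d0 - z = - (z - d0) by rowring.
  rewrite dotvNr -dotvNl; apply.
  by exists x0, (g x0 - z); split => //; rewrite HPhi; exists z.
split; first by exists x0, (g x0); split.
move=> eps eps0; have [del del0 H] := He eps eps0.
exists del => // z [x' [y' [Hy' ->]]]; rewrite /sv /= in Hy'; subst y'.
have Hd : row_mx x' (g x' - d0) - row_mx x0 (g x0 - d0) =
          row_mx x' (g x') - row_mx x0 (g x0).
  by rewrite !opp_row_mx !add_row_mx; congr row_mx; rowring.
rewrite -Hd; apply: H.
by exists x', (g x' - d0); split => //; rewrite HPhi; exists d0.
Qed.

Lemma regB {R : realType} {n m : nat} (g : 'rV[R]_n -> 'rV[R]_m) (D : set 'rV[R]_m)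
  (Phi : 'rV[R]_n -> set 'rV[R]_m) (HPhi : forall x', Phi x' = [set g x' - d | d in D])
  (x : 'rV[R]_n) (y : 'rV[R]_m) (xs : 'rV[R]_n) (ys : 'rV[R]_m) :
  Phi x y -> calm g x -> rnormal D (g x - y) ys ->
  rnormal (gph (sv g)) (row_mx x (g x)) (row_mx xs (- ys)) ->
  rnormal (gph Phi) (row_mx x y) (row_mx xs (- ys)).
Proof.
move=> Hxy [dc dc0 [L L0 Hc]] [_ HD] [_ HG].
have Hxy' := Hxy; rewrite HPhi in Hxy'; case: Hxy' => d0 Dd0 Ey; subst y.
have E0 : g x - (g x - d0) = d0 by rowring.
rewrite E0 in HD.
split; first by exists x, (g x - d0).
move=> eps eps0.
have hm : 0 <= (m%:R : R) by rewrite ler0n.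
pose K := (m%:R + 1) * (L + 1).
have K0 : 0 < K by rewrite /K; apply: mulr_gt0; lra.
pose e' := eps / (2 * K).
have e'0 : 0 < e' by rewrite /e' divr_gt0 // mulr_gt0.
have [d1 d10 H1] := HG e' e'0.
have [d2 d20 H2] := HD e' e'0.
exists (Num.min dc (Num.min (d1 / K) (d2 / K))).
  by rewrite !lt_min dc0 !divr_gt0.
move=> z [x' [y' [Hp ->]]] Hr; rewrite HPhi in Hp; case: Hp => d Dd Ey'; subst y'.
have Ediff : row_mx x' (g x' - d) - row_mx x (g x - d0) =
   row_mx (x' - x) ((g x' - d) - (g x - d0)) by rewrite opp_row_mx add_row_mx.
rewrite Ediff in Hr *.
move: Hr; rewrite !lt_min => /and3P[Hr1 Hr2 Hr3].
set a := x' - x in Hr1 Hr2 Hr3 *.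
set s := (g x' - d) - (g x - d0) in Hr1 Hr2 Hr3 *.
set r := enorm (row_mx a s) in Hr1 Hr2 Hr3 *.
set b := g x' - g x.
have ha : enorm a <= r := enorm_row_mx_l a s.
have hs : enorm s <= r := enorm_row_mx_r a s.
have r0 : 0 <= r := enorm_ge0 _.
have hb : enorm b <= L * r.
  apply: le_trans (Hc x' (le_lt_trans ha Hr1)) _.
  by rewrite ler_wpM2l // ltW.
have hb0 := enorm_ge0 b.
have hs0 := enorm_ge0 s.
have ha0 := enorm_ge0 a.
have hab : enorm (row_mx a b) <= K * r.
  apply: le_trans (enorm_row_mx_le a b) _.
  rewrite /K; nra.
have Ed : d - d0 = b - s by rewrite /b /s; rowring.
have hd : enorm (d - d0) <= K * r.
  rewrite Ed; apply: le_trans (enorm_le_norm _) _.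
  have h1 : `|b - s| <= enorm b + enorm s.
    apply: le_trans (ler_normB _ _) _.
    by apply: lerD; apply: norm_le_enorm.
  have h2 : m%:R * `|b - s| <= m%:R * (enorm b + enorm s) by rewrite ler_wpM2l.
  rewrite /K; nra.
have lt1 : K * r < d1 by rewrite mulrC -ltr_pdivlMr.
have lt2 : K * r < d2 by rewrite mulrC -ltr_pdivlMr.
have G := H1 (row_mx x' (g x')).
have Ed2 : row_mx x' (g x') - row_mx x (g x) = row_mx a b
  by rewrite opp_row_mx add_row_mx.
rewrite Ed2 in G.
have {G} G := G (ex_intro _ x' (ex_intro _ (g x') (conj erefl erefl)))
                (le_lt_trans hab lt1).
have Dp := H2 d Dd (le_lt_trans hd lt2).
rewrite !dotv_row_mx in G *.
have Es : s = b - (d - d0) by rowring.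
rewrite Es dotvDr dotvNr (dotvNl ys (d - d0)) opprK.
have G' : e' * enorm (row_mx a b) <= e' * (K * r) by rewrite ler_wpM2l // ltW.
have Dp' : e' * enorm (d - d0) <= e' * (K * r) by rewrite ler_wpM2l // ltW.
have hE : e' * (K * r) * 2 = eps * r.
  by rewrite /e'; field; rewrite gt_eqF.
lra.
Qed.

Lemma cvg_row_mx {R : realType} {n1 n2 : nat} (a_ : nat -> 'rV[R]_n1)
  (b_ : nat -> 'rV[R]_n2) (a : 'rV[R]_n1) (b : 'rV[R]_n2) :
  a_ @ \oo --> a -> b_ @ \oo --> b ->
  (fun k => row_mx (a_ k) (b_ k)) @ \oo --> row_mx a b.
Proof.
move=> /cvgrPdist_lt Ha /cvgrPdist_lt Hb; apply/cvgrPdist_lt => e e0.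
near=> k.
have -> : `|row_mx a b - row_mx (a_ k) (b_ k)| =
   mx_norm (row_mx a b - row_mx (a_ k) (b_ k)) by [].
rewrite mx_normrE; apply: bigmax_lt => // -[i j] _ /=.
rewrite opp_row_mx add_row_mx (ord1 i) mxE; case: splitP => j' _.
  apply: le_lt_trans (entry_le_norm _ j') _; near: k; exact: Ha.
apply: le_lt_trans (entry_le_norm _ j') _; near: k; exact: Hb.
Unshelve. all: by end_near.
Qed.

Lemma subseq_cvg {T : topologicalType} (s : nat -> T) (l : T) (f : nat -> nat) :
  (forall k, (f k < f k.+1)%N) -> s @ \oo --> l -> (s \o f) @ \oo --> l.
Proof.
move=> Hf Hs.
have Hge : forall k, (k <= f k)%N by elim => // k IH; exact: leq_ltn_trans IH (Hf k).
apply: cvg_comp Hs => A [N _ HA]; exists N => // k /= Hk; apply: HA => /=.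
exact: leq_trans Hk (Hge k).
Qed.

Lemma cluster_subseq {R : realType} (V : normedModType R) (q : nat -> V) (p : V) :
  cluster (q @ \oo) p ->
  exists f : nat -> nat, (forall k, (f k < f k.+1)%N) /\ (q \o f) @ \oo --> p.
Proof.
move=> Hcl.
have H : forall N k : nat, exists j, (N < j)%N /\ `|p - q j| < k.+1%:R^-1.
  move=> N k.
  have HA : (q @ \oo) [set z | exists j, (N < j)%N /\ z = q j].
    by exists N.+1 => // j /= Hj; exists j.
  have HB : nbhs p (ball p k.+1%:R^-1) by exact: nbhsx_ballx.
  have := Hcl _ _ HA HB.
  by case=> z [[j [Hj ->]] Hb]; exists j; split => //; rewrite -ball_normE in Hb.
pose pick N k := projT1 (cid (H N k)).
have Hpick : forall N k, (N < pick N k)%N /\ `|p - q (pick N k)| < k.+1%:R^-1.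
  by move=> N k; exact: (projT2 (cid (H N k))).
pose f := fix F k := if k is k'.+1 then pick (F k') k else pick 0%N 0%N.
exists f; split; first by move=> k; exact: (Hpick _ _).1.
have Hq : forall k, `|p - q (f k)| < k.+1%:R^-1.
  by case=> [|k]; exact: (Hpick _ _).2.
apply/cvgrPdist_lt => e e0.
have := near_infty_natSinv_lt (PosNum e0).
apply: filterS => k /= Hk; exact: lt_trans (Hq k) Hk.
Qed.

Lemma partii {R : realType} {n m : nat}
  (g : 'rV[R]_n -> 'rV[R]_m) (D : set 'rV[R]_m)
  (Phi : 'rV[R]_n -> set 'rV[R]_m) (x : 'rV[R]_n) (y : 'rV[R]_m) :
  continuous g -> (forall x', Phi x' = [set g x' - d | d in D]) ->
  (forall ys : 'rV[R]_m,
     lcoder Phi x y ys `<=`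
       [set xs | lnormal D (g x - y) ys /\ lcoder (sv g) x (g x) ys xs]).
Proof.
move=> hg HPhi ys xs [z_ [e_ [Hk [Hz He]]]].
pose x_ k := lsubmx (z_ k); pose y_ k := rsubmx (z_ k).
have HP k : Phi (x_ k) (y_ k) /\ z_ k = row_mx (x_ k) (y_ k).
  case: (Hk k) => -[x' [y' [Hp Ez]]] _.
  by rewrite /x_ /y_ Ez row_mxKl row_mxKr.
have HA k : rnormal D (g (x_ k) - y_ k) (- rsubmx (e_ k)) /\
    rnormal (gph (sv g)) (row_mx (x_ k) (g (x_ k))) (e_ k).
  by apply: (regA _ _ _ HPhi) (HP k).1 _; rewrite -(HP k).2; exact: Hk.
have Hx : x_ @ \oo --> x.
  have := continuous_cvg _ (@continuous_lsubmx R 1 n m (row_mx x y)) Hz.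
  by rewrite row_mxKl; apply.
have Hy : y_ @ \oo --> y.
  have := continuous_cvg _ (@continuous_rsubmx R 1 n m (row_mx x y)) Hz.
  by rewrite row_mxKr; apply.
have Hgx : (g \o x_) @ \oo --> g x by apply: continuous_cvg; [exact: hg | exact: Hx].
have Hre : (rsubmx \o e_) @ \oo --> - ys.
  have := continuous_cvg _ (@continuous_rsubmx R 1 n m (row_mx xs (- ys))) He.
  by rewrite row_mxKr; apply.
split.
  exists (fun k => g (x_ k) - y_ k), (fun k => - rsubmx (e_ k)).
  split; first by move=> k; have := (HA k).1.
  split; first by have H := cvgB Hgx Hy; apply: H.
  by rewrite -[ys]opprK; have H := cvgN Hre; apply: H.
exists (fun k => row_mx (x_ k) (g (x_ k))), e_.
split; first by move=> k; exact: (HA k).2.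
split => //; exact: cvg_row_mx Hx Hgx.
Qed.


Lemma partiii {R : realType} {n m : nat}
  (g : 'rV[R]_n -> 'rV[R]_m) (D : set 'rV[R]_m)
  (Phi : 'rV[R]_n -> set 'rV[R]_m) (x : 'rV[R]_n) (y : 'rV[R]_m) :
  (forall x', Phi x' = [set g x' - d | d in D]) -> Phi x y ->
  (calm g x -> forall (u : 'rV[R]_n) (v ys : 'rV[R]_m),
     dcoder Phi x y u v ys `<=`
       [set xs | exists w : 'rV[R]_m, gderiv g x u w /\
                   dlnormal D (g x - y) (w - v) ys /\
                   dcoder (sv g) x (g x) u w ys xs]).
Proof.
move=> HPhi Hxy [dc dc0 [L L0 Hc]] u v ys xs [t_ [w_ [e_ [Ht [Ht0 [Hw [He Hk]]]]]]].
pose u_ k := lsubmx (w_ k); pose v_ k := rsubmx (w_ k).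
have Ep k : row_mx x y + t_ k *: w_ k = row_mx (x + t_ k *: u_ k) (y + t_ k *: v_ k).
  by rewrite -{1}[w_ k]hsubmxK scale_row_mx add_row_mx.
have HP k : Phi (x + t_ k *: u_ k) (y + t_ k *: v_ k).
  case: (Hk k) => -[x' [y' [Hp Ez]]] _; rewrite Ep in Ez.
  by case/eq_row_mx: Ez => -> ->.
have HA k : rnormal D (g (x + t_ k *: u_ k) - (y + t_ k *: v_ k)) (- rsubmx (e_ k)) /\
    rnormal (gph (sv g)) (row_mx (x + t_ k *: u_ k) (g (x + t_ k *: u_ k))) (e_ k).
  by apply: (regA _ _ _ HPhi) (HP k) _; rewrite -Ep; exact: (Hk k).
pose q_ k := (t_ k)^-1 *: (g (x + t_ k *: u_ k) - g x).
have Eq k : g (x + t_ k *: u_ k) = g x + t_ k *: q_ k.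
  by rewrite /q_ scalerA mulfV ?gt_eqF // scale1r addrCA subrr addr0.
have Hu : u_ @ \oo --> u.
  have := continuous_cvg _ (@continuous_lsubmx R 1 n m (row_mx u v)) Hw.
  by rewrite row_mxKl; apply.
have Hv : v_ @ \oo --> v.
  have := continuous_cvg _ (@continuous_rsubmx R 1 n m (row_mx u v)) Hw.
  by rewrite row_mxKr; apply.
have Hre : (rsubmx \o e_) @ \oo --> - ys.
  have := continuous_cvg _ (@continuous_rsubmx R 1 n m (row_mx xs (- ys))) He.
  by rewrite row_mxKr; apply.
have Htu : (fun k => t_ k *: u_ k) @ \oo --> (0 : 'rV[R]_n).
  by have H := cvgZ Ht0 Hu; rewrite scale0r in H; apply: H.
have hn : 0 <= (n%:R : R) by rewrite ler0n.
have N1 : \forall k \near \oo, n%:R * `|t_ k *: u_ k| < dc.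
  move/cvgrPdist_lt: Htu => /(_ (dc / (n%:R + 1))) H.
  have : 0 < dc / (n%:R + 1) by rewrite divr_gt0 //; lra.
  move/H; apply: filterS => k; rewrite sub0r normrN => h.
  have h0 := normr_ge0 (t_ k *: u_ k).
  move: h; rewrite ltr_pdivlMr; last by lra.
  nra.
have N2 : \forall k \near \oo, `|u_ k| <= `|u| + 1.
  move/cvgrPdist_lt: Hu => /(_ 1 ltr01); apply: filterS => k h.
  have -> : u_ k = u - (u - u_ k) by rowring.
  apply: le_trans (ler_normB _ _) _; lra.
pose M := L * n%:R * (`|u| + 1).
have HB : \forall k \near \oo, closed_ball_ Num.norm (0 : 'rV[R]_m) M (q_ k).
  near=> k.
  rewrite /closed_ball_ /= sub0r normrN.
  have tk := Ht k.
  have etu : enorm (x + t_ k *: u_ k - x) = t_ k * enorm (u_ k).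
    by rewrite addrC addKr enormZ gtr0_norm.
  have hlt : enorm (x + t_ k *: u_ k - x) < dc.
    apply: le_lt_trans (enorm_le_norm _) _.
    rewrite addrC addKr; near: k; exact: N1.
  have := Hc _ hlt; rewrite etu => hc.
  have hq : enorm (q_ k) <= L * enorm (u_ k).
    rewrite /q_ enormZ gtr0_norm ?invr_gt0 //.
    rewrite -(ler_pM2l tk) mulrA mulfV ?gt_eqF // mul1r.
    by apply: le_trans hc _; rewrite mulrCA.
  apply: le_trans (norm_le_enorm _) _; apply: le_trans hq _.
  rewrite /M -mulrA ler_pM2l //.
  apply: le_trans (enorm_le_norm _) _.
  apply: ler_wpM2l => //; near: k; exact: N2.
have cK : compact (closed_ball_ Num.norm (0 : 'rV[R]_m) M).
  apply: bounded_closed_compact; last exact: closed_closed_ball_.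
  exists M; split; first exact: num_real.
  move=> r Mr z; rewrite /closed_ball_ /= sub0r normrN => h.
  exact: le_trans h (ltW Mr).
have [p [Kp Hcl]] := cK (q_ @ \oo) _ HB.
have [f [Hf Hqf]] := cluster_subseq _ _ _ Hcl.
have Htf := subseq_cvg _ _ _ Hf Ht0.
have Huf := subseq_cvg _ _ _ Hf Hu.
have Hvf := subseq_cvg _ _ _ Hf Hv.
have Hef := subseq_cvg _ _ _ Hf He.
have Hresf := subseq_cvg _ _ _ Hf Hre.
have Hd : (fun k => row_mx (u_ (f k)) (q_ (f k))) @ \oo --> row_mx u p.
  exact: cvg_row_mx Huf Hqf.
have Em k : row_mx x (g x) + t_ (f k) *: row_mx (u_ (f k)) (q_ (f k)) =
    row_mx (x + t_ (f k) *: u_ (f k)) (g (x + t_ (f k) *: u_ (f k))).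
  by rewrite scale_row_mx add_row_mx Eq.
exists p; split.
  exists (t_ \o f), (fun k => row_mx (u_ (f k)) (q_ (f k))).
  split; first by move=> k; exact: Ht.
  split => //; split => // k; rewrite Em.
  by exists (x + t_ (f k) *: u_ (f k)), (g (x + t_ (f k) *: u_ (f k))).
split.
  exists (t_ \o f), (fun k => q_ (f k) - v_ (f k)), (fun k => - rsubmx (e_ (f k))).
  split; first by move=> k; exact: Ht.
  split => //.
  split; first by have H := cvgB Hqf Hvf; apply: H.
  split; first by rewrite -[ys]opprK; have H := cvgN Hresf; apply: H.
  move=> k; have := (HA (f k)).1; rewrite Eq.
  have -> : g x + t_ (f k) *: q_ (f k) - (y + t_ (f k) *: v_ (f k)) =
     g x - y + t_ (f k) *: (q_ (f k) - v_ (f k)) by rowring.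
  by [].
exists (t_ \o f), (fun k => row_mx (u_ (f k)) (q_ (f k))), (e_ \o f).
split; first by move=> k; exact: Ht.
do 3 (split => //).
by move=> k; rewrite /= Em; exact: (HA (f k)).2.
Unshelve. all: by end_near.
Qed.

Theorem mainTheorem1 (R : realType) (n m : nat)
  (g : 'rV[R]_n -> 'rV[R]_m) (D : set 'rV[R]_m)
  (Phi : 'rV[R]_n -> set 'rV[R]_m) (x : 'rV[R]_n) (y : 'rV[R]_m) :
  continuous g -> D !=set0 -> closed D ->
  (forall x', Phi x' = [set g x' - d | d in D]) ->
  Phi x y ->
  (* (i) *)
  (forall ys : 'rV[R]_m,
     rcoder Phi x y ys `<=`
       [set xs | rnormal D (g x - y) ys /\ rcoder (sv g) x (g x) ys xs]) /\
  (calm g x -> forall ys : 'rV[R]_m,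
     [set xs | rnormal D (g x - y) ys /\ rcoder (sv g) x (g x) ys xs]
       `<=` rcoder Phi x y ys) /\
  (* (ii) *)
  (forall ys : 'rV[R]_m,
     lcoder Phi x y ys `<=`
       [set xs | lnormal D (g x - y) ys /\ lcoder (sv g) x (g x) ys xs]) /\
  (* (iii) *)
  (calm g x -> forall (u : 'rV[R]_n) (v ys : 'rV[R]_m),
     dcoder Phi x y u v ys `<=`
       [set xs | exists w : 'rV[R]_m, gderiv g x u w /\
                   dlnormal D (g x - y) (w - v) ys /\
                   dcoder (sv g) x (g x) u w ys xs]).
Proof.
move=> hg _ _ HPhi Hxy.
split.
  move=> ys xs Hr; have [h1 h2] := regA _ _ _ HPhi _ _ _ Hxy Hr.
  by rewrite row_mxKr opprK in h1.
split.
  by move=> hc ys xs [h1 h2]; exact: (regB _ _ _ HPhi _ _ _ _ Hxy hc h1 h2).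
split; first exact: (partii _ _ _ _ _ hg HPhi).
exact: (partiii _ _ _ _ _ HPhi Hxy).
Qed.
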